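(* $\Omega(\eta)$ is equimorphic, as a join-semilattice, to every member of $\mathcal{L_D}$.
   Context: $\Omega(\eta)$ denotes the join-subsemilattice of the direct product $\mathbb{N}\times D$ (componentwise order), where $\mathbb{N}$ is the chain of non-negative integers and $D$ is the chain of dyadic rationals in $[0,1)$, consisting of the pairs $(n,r)$ with $2^n r\in\mathbb{Z}$. A bichain is a triple $B=(X,\leq_1,\leq_2)$ with $\leq_1,\leq_2$ linear orders on a set $X$; $C(B)$ denotes the closure system on $X$ whose closed sets are the sets $I_1\cap I_2$ with $I_k$ an initial segment of $(X,\leq_k)$, ordered by inclusion (an algebraic lattice), and $K(C(B))$ is the join-semilattice of its compact elements (the closures of finite subsets of $X$). $\mathcal{L_D}$ is the class of join-semilattices isomorphic to $K(C(B))$ for some bichain $B$ whose first component $(X,\leq_1)$ has order type $\omega$ and whose second component $(X,\leq_2)$ is not order-scattered (contains a copy of $\mathbb{Q}$). Two join-semilattices are equimorphic as join-semilattices if each embeds into the other by a one-to-one join-preserving map. *)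

(* Defs.v *)
From Stdlib Require List.
From mathcomp Require Import all_boot all_order all_algebra.
Set Implicit Arguments. Unset Strict Implicit. Unset Printing Implicit Defensive.
Import Order.TTheory GRing.Theory Num.Theory.

Definition is_join (T : Type) (le : T -> T -> Prop) (a b c : T) : Prop :=
  le a c /\ le b c /\ (forall d, le a d -> le b d -> le c d).

Definition join_embedding (T U : Type) (leT : T -> T -> Prop)
    (leU : U -> U -> Prop) (f : T -> U) : Prop :=
  (forall x y, f x = f y -> x = y) /\
  (forall a b c, is_join leT a b c -> is_join leU (f a) (f b) (f c)).

Definition join_equimorphic (T U : Type) (leT : T -> T -> Prop)
    (leU : U -> U -> Prop) : Prop :=
  (exists f : T -> U, join_embedding leT leU f) /\
  (exists g : U -> T, join_embedding leU leT g).

Definition linear_order (X : Type) (le : X -> X -> Prop) : Prop :=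
  (forall x, le x x) /\
  (forall x y, le x y -> le y x -> x = y) /\
  (forall x y z, le x y -> le y z -> le x z) /\
  (forall x y, le x y \/ le y x).

Definition order_type_omega (X : Type) (le : X -> X -> Prop) : Prop :=
  exists f : nat -> X,
    (forall x : X, exists n, f n = x) /\
    (forall m n : nat, le (f m) (f n) <-> (m <= n)%N).

(* (X, le) is not order-scattered: it contains a copy of the rationals *)
Definition contains_copy_of_Q (X : Type) (le : X -> X -> Prop) : Prop :=
  exists g : rat -> X,
    forall p q : rat, le (g p) (g q) <-> (p <= q)%R.

Definition omega_mem (p : nat * rat) : Prop :=
  (0 <= p.2)%R /\ (p.2 < 1)%R /\
  exists z : int, ((2%:R ^+ p.1) * p.2 = z%:~R)%R.

Definition Omega_eta : Type := {p : nat * rat | omega_mem p}.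

Definition Omega_le (p q : Omega_eta) : Prop :=
  ((proj1_sig p).1 <= (proj1_sig q).1)%N /\
  ((proj1_sig p).2 <= (proj1_sig q).2)%R.

Definition initial_segment (X : Type) (le : X -> X -> Prop) (I : X -> Prop)
  : Prop := forall x y, le y x -> I x -> I y.

Definition bichain_closed (X : Type) (le1 le2 : X -> X -> Prop)
    (S : X -> Prop) : Prop :=
  exists I1 I2 : X -> Prop,
    initial_segment le1 I1 /\ initial_segment le2 I2 /\
    S = (fun x => I1 x /\ I2 x).

Definition bichain_closure (X : Type) (le1 le2 : X -> X -> Prop)
    (A : X -> Prop) : X -> Prop :=
  fun x => forall S, bichain_closed le1 le2 S ->
             (forall y, A y -> S y) -> S x.

Definition bichain_compact (X : Type) (le1 le2 : X -> X -> Prop)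
    (S : X -> Prop) : Prop :=
  exists l : seq X, S = bichain_closure le1 le2 (fun y => List.In y l).

Definition KCB (X : Type) (le1 le2 : X -> X -> Prop) : Type :=
  {S : X -> Prop | bichain_compact le1 le2 S}.

Definition KCB_le (X : Type) (le1 le2 : X -> X -> Prop)
    (S T : KCB le1 le2) : Prop :=
  forall x, proj1_sig S x -> proj1_sig T x.

(* Main.v *)
Require Import Defs.
From mathcomp Require Import all_boot all_order all_algebra.
From mathcomp Require Import lra.
From Stdlib Require Import Classical ClassicalEpsilon FunctionalExtensionality PropExtensionality ProofIrrelevance.
Set Implicit Arguments. Unset Strict Implicit. Unset Printing Implicit Defensive.
Import Order.TTheory GRing.Theory Num.Theory.
Local Open Scope ring_scope.


Lemma Omega_ext (p q : Omega_eta) : proj1_sig p = proj1_sig q -> p = q.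
Proof.
case: p => p Hp; case: q => q Hq /= E; subst q; congr exist; exact: proof_irrelevance.
Qed.

Lemma omega_mem_mono n m (r : rat) : omega_mem (n, r) -> (n <= m)%N -> omega_mem (m, r).
Proof.
move=> [H0 [H1 [z Hz]]] Hnm; split => //; split => //=.
exists (z * (2 ^ (m - n))%:Z)%R.
rewrite /= in Hz *.
rewrite -{1}(subnK Hnm) exprD -mulrA Hz rmorphM /= mulrC; congr (_ * _).
by rewrite -pmulrn natrX.
Qed.

Definition max_pair (p q : nat * rat) : nat * rat := (maxn p.1 q.1, Num.max p.2 q.2).

Lemma max_pair_mem p q : omega_mem p -> omega_mem q -> omega_mem (max_pair p q).
Proof.
case: p => n r; case: q => m s Hp Hq; rewrite /max_pair /=.
case: (leP r s) => _.
- apply: omega_mem_mono Hq _; exact: leq_maxr.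
- apply: omega_mem_mono Hp _; exact: leq_maxl.
Qed.

Lemma Om_join_intro (p1 p2 p3 : Omega_eta) :
  proj1_sig p3 = max_pair (proj1_sig p1) (proj1_sig p2) ->
  is_join Omega_le p1 p2 p3.
Proof.
rewrite /is_join /Omega_le => E; rewrite E /=; split; last split.
- by rewrite leq_maxl le_max lexx.
- by rewrite leq_maxr le_max lexx orbT.
- by move=> d [h1 h2] [h3 h4]; rewrite geq_max ge_max h1 h2 h3 h4.
Qed.

Lemma Mx1 (x y : rat) : x <= Num.max x y. Proof. by rewrite le_max lexx. Qed.
Lemma Mx2 (x y : rat) : y <= Num.max x y. Proof. by rewrite le_max lexx orbT. Qed.

Lemma Om_join_elim (p1 p2 p3 : Omega_eta) :
  is_join Omega_le p1 p2 p3 ->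
  proj1_sig p3 = max_pair (proj1_sig p1) (proj1_sig p2).
Proof.
move=> [[h1 h2] [[h3 h4] H]].
have Hm := max_pair_mem (proj2_sig p1) (proj2_sig p2).
have [h5 h6] := H (exist _ _ Hm) (conj (leq_maxl _ _) (Mx1 _ _)) (conj (leq_maxr _ _) (Mx2 _ _)).
rewrite /= in h5 h6.
case: (proj1_sig p3) h1 h2 h3 h4 h5 h6 => n r /= h1 h2 h3 h4 h5 h6.
rewrite /max_pair; congr pair.
- by apply/eqP; rewrite eqn_leq h5 geq_max h1 h3.
- by apply/eqP; rewrite eq_le h6 ge_max h2 h4.
Qed.

Section Bi.
Variables (X : Type) (le1 le2 : X -> X -> Prop).
Hypothesis L1 : linear_order le1.
Hypothesis L2 : linear_order le2.

Definition Sab (a b : X) : X -> Prop := fun x => le1 x a /\ le2 x b.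
Definition Pab (a b : X) : Prop := le2 a b /\ le1 b a.

Lemma le1_refl x : le1 x x. Proof. by case: L1. Qed.
Lemma le2_refl x : le2 x x. Proof. by case: L2. Qed.
Lemma le1_trans x y z : le1 x y -> le1 y z -> le1 x z.
Proof. case: L1 => _ [_ [H _]]; exact: H. Qed.
Lemma le2_trans x y z : le2 x y -> le2 y z -> le2 x z.
Proof. case: L2 => _ [_ [H _]]; exact: H. Qed.
Lemma le1_anti x y : le1 x y -> le1 y x -> x = y.
Proof. case: L1 => _ [H _]; exact: H. Qed.
Lemma le2_anti x y : le2 x y -> le2 y x -> x = y.
Proof. case: L2 => _ [H _]; exact: H. Qed.
Lemma le1_total x y : le1 x y \/ le1 y x.
Proof. by case: L1 => _ [_ [_ H]]. Qed.
Lemma le2_total x y : le2 x y \/ le2 y x.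
Proof. by case: L2 => _ [_ [_ H]]. Qed.

Lemma Sab_closed a b : bichain_closed le1 le2 (Sab a b).
Proof.
exists (fun x => le1 x a), (fun x => le2 x b); split; last split => //.
- move=> x y Hyx Hx; exact: le1_trans Hyx Hx.
- move=> x y Hyx Hx; exact: le2_trans Hyx Hx.
Qed.

Lemma closure_contains (A : X -> Prop) m1 m2 :
  bichain_closure le1 le2 A m1 -> bichain_closure le1 le2 A m2 ->
  forall x, Sab m1 m2 x -> bichain_closure le1 le2 A x.
Proof.
move=> H1 H2 x [Hx1 Hx2] S [I1 [I2 [HI1 [HI2 ->]]]] HA.
have [h1 _] := H1 _ (ex_intro _ I1 (ex_intro _ I2 (conj HI1 (conj HI2 erefl)))) HA.
have [_ h2] := H2 _ (ex_intro _ I1 (ex_intro _ I2 (conj HI1 (conj HI2 erefl)))) HA.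
split; [exact: HI1 h1 | exact: HI2 h2].
Qed.

Lemma closure_sub (A S : X -> Prop) : bichain_closed le1 le2 S ->
  (forall y, A y -> S y) -> forall x, bichain_closure le1 le2 A x -> S x.
Proof. by move=> HS HA x Hx; apply: Hx. Qed.

Lemma closure_in (A : X -> Prop) x : A x -> bichain_closure le1 le2 A x.
Proof. by move=> Hx S _ HA; apply: HA. Qed.

Lemma Sab_closure a b : Pab a b ->
  Sab a b = bichain_closure le1 le2 (fun y => List.In y [:: a; b]).
Proof.
move=> [Hab Hba]; apply: functional_extensionality => x.
apply: propositional_extensionality; split.
- apply: closure_contains; apply: closure_in; simpl; tauto.
- apply: closure_sub; first exact: Sab_closed.
  move=> y /= [<-|[<-|[]]]; split => //; by [apply: le1_refl|apply: le2_refl].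
Qed.

Lemma Sab_compact a b : Pab a b -> bichain_compact le1 le2 (Sab a b).
Proof. by move=> H; exists [:: a; b]; exact: Sab_closure. Qed.

Definition mkK a b (H : Pab a b) : KCB le1 le2 := exist _ (Sab a b) (Sab_compact H).

Lemma list_max (l : seq X) : l = [::] \/
  exists a b, List.In a l /\ List.In b l /\ forall y, List.In y l -> le1 y a /\ le2 y b.
Proof.
elim: l => [|c l [->|[a [b [Ha [Hb Hy]]]]]]; first by left.
- right; exists c, c; split; first by left. split; first by left.
  move=> y /= [<-|[]]; split; by [apply: le1_refl|apply: le2_refl].
- right.
  have [h1|h1] := le1_total a c; have [h2|h2] := le2_total b c.
  + exists c, c; do 2 (split; first by left).
    move=> y /= [<-|Hy']; first by split; [apply: le1_refl|apply: le2_refl].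
    have [] := Hy _ Hy'; split; [exact: le1_trans h1|exact: le2_trans h2].
  + exists c, b; split; first by left. split; first by right.
    move=> y /= [<-|Hy']; first by split; [apply: le1_refl|].
    have [] := Hy _ Hy'; split; [exact: le1_trans h1|by []].
  + exists a, c; split; first by right. split; first by left.
    move=> y /= [<-|Hy']; first by split; [|apply: le2_refl].
    have [] := Hy _ Hy'; split; [by []|exact: le2_trans h2].
  + exists a, b; split; first by right. split; first by right.
    move=> y /= [<-|Hy']; first by split.
    exact: Hy.
Qed.

Lemma KCB_rep (T : KCB le1 le2) :
  (forall x, ~ proj1_sig T x) \/
  exists a b, Pab a b /\ forall x, proj1_sig T x <-> Sab a b x.
Proof.
case: T => T HT /=; case: HT => l ->.
have [->|[a [b [Ha [Hb Hy]]]]] := list_max l.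
- left => x Hx.
  have HC : bichain_closed le1 le2 (fun _ : X => False /\ True).
    by exists (fun _ => False), (fun _ => True); split; last split.
  by have [] := closure_sub HC (fun y (h : List.In y [::]) => match h with end) Hx.
- right; exists a, b.
  have HT : forall x, bichain_closure le1 le2 (fun y => List.In y l) x <-> Sab a b x.
    move=> x; split.
    + apply: closure_sub; first exact: Sab_closed. exact: Hy.
    + apply: closure_contains; exact: closure_in.
  split => //; split.
  + by have [] := Hy _ Ha.
  + by have [] := Hy _ Hb.
Qed.

Lemma KCB_ext (T U : KCB le1 le2) :
  (forall x, proj1_sig T x <-> proj1_sig U x) -> T = U.
Proof.
case: T => T HT; case: U => U HU /= H.
have E : T = U.
  apply: functional_extensionality => x; apply: propositional_extensionality; exact: H.
subst U; congr exist; exact: proof_irrelevance.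
Qed.

Lemma Sab_inj a b a' b' : Pab a b -> Pab a' b' ->
  (forall x, Sab a b x <-> Sab a' b' x) -> a = a' /\ b = b'.
Proof.
move=> [h1 h2] [h1' h2'] H.
have [Ha1 Ha2] : Sab a' b' a by apply/H; split => //; apply: le1_refl.
have [Hb1 Hb2] : Sab a' b' b by apply/H; split => //; apply: le2_refl.
have [Ha1' Ha2'] : Sab a b a' by apply/H; split => //; apply: le1_refl.
have [Hb1' Hb2'] : Sab a b b' by apply/H; split => //; apply: le2_refl.
split; [exact: le1_anti | exact: le2_anti].
Qed.

Lemma Sab_join a1 b1 a2 b2 a3 b3 (H1 : Pab a1 b1) (H2 : Pab a2 b2) (H3 : Pab a3 b3) :
  le1 a1 a3 -> le1 a2 a3 -> (a3 = a1 \/ a3 = a2) ->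
  le2 b1 b3 -> le2 b2 b3 -> (b3 = b1 \/ b3 = b2) ->
  is_join (@KCB_le X le1 le2) (mkK H1) (mkK H2) (mkK H3).
Proof.
move=> la1 la2 ea lb1 lb2 eb; rewrite /KCB_le /=.
split; first by move=> x [h h']; split; [exact: le1_trans la1|exact: le2_trans lb1].
split; first by move=> x [h h']; split; [exact: le1_trans la2|exact: le2_trans lb2].
case=> T HT /= U1 U2; case: HT U1 U2 => l -> U1 U2.
apply: closure_contains.
- case: ea => ->; [apply: U1; case: H1 => p q|apply: U2; case: H2 => p q];
  (split; [apply: le1_refl|by []]).
- case: eb => ->; [apply: U1; case: H1 => p q|apply: U2; case: H2 => p q];
  (split; [by []|apply: le2_refl]).
Qed.


Variable f1 : nat -> X.
Hypothesis f1_surj : forall x : X, exists n, f1 n = x.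
Hypothesis f1_ord : forall m n : nat, le1 (f1 m) (f1 n) <-> (m <= n)%N.
Variable g : rat -> X.
Hypothesis g_ord : forall p q : rat, le2 (g p) (g q) <-> (p <= q).

Definition pos (x : X) : nat := proj1_sig (constructive_indefinite_description _ (f1_surj x)).
Lemma f1_pos x : f1 (pos x) = x.
Proof. exact: (proj2_sig (constructive_indefinite_description _ (f1_surj x))). Qed.
Lemma pos_le1 x y : le1 x y <-> (pos x <= pos y)%N.
Proof. by rewrite -f1_ord !f1_pos. Qed.
Lemma pos_inj x y : pos x = pos y -> x = y.
Proof. by move=> E; rewrite -(f1_pos x) -(f1_pos y) E. Qed.
Lemma g_inj p q : g p = g q -> p = q.
Proof.
move=> E; apply/eqP; rewrite eq_le; apply/andP; split; apply/g_ord; rewrite E; exact: le2_refl.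
Qed.

Lemma exists_big N : exists x, (N <= pos x)%N /\ le2 x (g 0).
Proof.
apply: NNPP => H.
have Hlt : forall t : nat, (pos (g (- t%:R)) < N)%N.
  move=> t; rewrite ltnNge; apply/negP => Ht; apply: H; exists (g (- t%:R)); split => //.
  by apply/g_ord; rewrite oppr_le0 ler0n.
pose F (i : 'I_N.+1) : 'I_N := Ordinal (Hlt i).
have Finj : injective F.
  move=> i j /(congr1 val) /= /pos_inj /g_inj /oppr_inj /eqP; rewrite eqr_nat => /eqP.
  exact: val_inj.
by have := @leq_card _ _ F Finj; rewrite !card_ord ltnn.
Qed.

Definition Bnd (n : nat) : nat := \max_(k < 2 ^ n) pos (g (k%:R / 2%:R ^+ n)).
Definition pick (N : nat) : X := proj1_sig (constructive_indefinite_description _ (exists_big N)).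
Lemma pick_spec N : (N <= pos (pick N))%N /\ le2 (pick N) (g 0).
Proof. exact: (proj2_sig (constructive_indefinite_description _ (exists_big N))). Qed.

Fixpoint Aseq (n : nat) : X :=
  match n with 0 => pick (Bnd 0) | n'.+1 => pick (maxn (Bnd n'.+1) (pos (Aseq n')).+1) end.

Lemma Aseq_bnd n : (Bnd n <= pos (Aseq n))%N /\ le2 (Aseq n) (g 0).
Proof.
case: n => [|n] /=; first exact: pick_spec.
have [h1 h2] := pick_spec (maxn (Bnd n.+1) (pos (Aseq n)).+1).
split => //; exact: leq_trans (leq_maxl _ _) h1.
Qed.

Lemma Aseq_succ n : (pos (Aseq n) < pos (Aseq n.+1))%N.
Proof.
rewrite /=; have [h1 _] := pick_spec (maxn (Bnd n.+1) (pos (Aseq n)).+1).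
exact: leq_trans (leq_maxr _ _) h1.
Qed.

Lemma Aseq_lt m n : (m < n)%N -> (pos (Aseq m) < pos (Aseq n))%N.
Proof.
elim: n => [//|n IH]; rewrite ltnS leq_eqVlt => /orP [/eqP ->|h].
- exact: Aseq_succ.
- exact: ltn_trans (IH h) (Aseq_succ n).
Qed.

Lemma Aseq_le m n : (m <= n)%N -> le1 (Aseq m) (Aseq n).
Proof.
rewrite leq_eqVlt => /orP [/eqP ->|h]; first exact: le1_refl.
by apply/pos_le1; apply: ltnW; apply: Aseq_lt.
Qed.

Lemma Aseq_inj m n : Aseq m = Aseq n -> m = n.
Proof.
move=> E; case: (ltngtP m n) => // h; have := Aseq_lt h; by rewrite E ltnn.
Qed.

Lemma D_bound n r : omega_mem (n, r) -> (pos (g r) <= Bnd n)%N.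
Proof.
move=> [H0 [H1 [z Hz]]]; rewrite /= in H0 H1 Hz.
have H2 : (2%:R ^+ n : rat) != 0 by rewrite expf_neq0 // pnatr_eq0.
have Hz0 : (0 <= z)%R.
  by rewrite -(ler0z rat) -Hz mulr_ge0 // exprn_ge0 // ler0n.
case: z Hz Hz0 => [k|k] Hz Hz0; last by [].
have {}Hz : 2%:R ^+ n * r = k%:R by rewrite Hz pmulrn.
have Er : r = k%:R / 2%:R ^+ n.
  by rewrite -Hz [_ * r]mulrC mulfK.
have Hk : (k < 2 ^ n)%N.
  rewrite -(ltr_nat rat) natrX -Hz -{2}(mulr1 (2%:R ^+ n)).
  by rewrite ltr_pM2l // exprn_gt0 // ltr0n.
rewrite Er; exact: (@leq_bigmax _ (fun k : 'I_(2 ^ n) => pos (g (k%:R / 2%:R ^+ n))) (Ordinal Hk)).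
Qed.

Lemma phiP (q : nat * rat) : omega_mem q -> Pab (Aseq q.1) (g q.2).
Proof.
case: q => n r Hm /=; split.
- apply: le2_trans (proj2 (Aseq_bnd n)) _; apply/g_ord; by case: Hm.
- apply/pos_le1; exact: leq_trans (D_bound Hm) (proj1 (Aseq_bnd n)).
Qed.

Definition phi (p : Omega_eta) : KCB le1 le2 := mkK (phiP (proj2_sig p)).

Lemma dir1 : exists f : Omega_eta -> KCB le1 le2, join_embedding Omega_le (@KCB_le X le1 le2) f.
Proof.
exists phi; split.
- move=> p q E; apply: Omega_ext.
  have E' := congr1 (fun T => proj1_sig T) E; rewrite /= in E'.
  have [ea eb] : Aseq (proj1_sig p).1 = Aseq (proj1_sig q).1 /\ g (proj1_sig p).2 = g (proj1_sig q).2.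
    apply: Sab_inj; [exact: phiP (proj2_sig p)|exact: phiP (proj2_sig q)|by rewrite E'].
  case: (proj1_sig p) ea eb => n r; case: (proj1_sig q) => n' r' /= /Aseq_inj -> /g_inj -> //.
- move=> p1 p2 p3 /Om_join_elim E.
  rewrite /phi; apply: Sab_join; rewrite E /max_pair /=.
  + apply: Aseq_le; exact: leq_maxl.
  + apply: Aseq_le; exact: leq_maxr.
  + by case: leqP => h; [right|left].
  + by apply/g_ord; rewrite le_max lexx.
  + by apply/g_ord; rewrite le_max lexx orbT.
  + by case: leP => h; [right|left].
Qed.

Lemma f1_inj m n : f1 m = f1 n -> m = n.
Proof.
move=> E; apply/eqP; rewrite eqn_leq; apply/andP; split; apply/f1_ord; rewrite E; exact: le1_refl.
Qed.

Definition lt2b (j k : nat) : bool :=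
  if excluded_middle_informative (le2 (f1 j) (f1 k) /\ j <> k) then true else false.

Lemma lt2bP j k : lt2b j k <-> (le2 (f1 j) (f1 k) /\ j <> k).
Proof. by rewrite /lt2b; case: excluded_middle_informative. Qed.

Definition w (j : nat) : rat := (4%:R ^+ j.+1)^-1.

Lemma w_gt0 j : 0 < w j.
Proof. by rewrite /w invr_gt0 exprn_gt0 // ltr0n. Qed.

Lemma w_succ j : w j = 4%:R * w j.+1.
Proof.
by rewrite /w [in RHS]exprS invfM mulrA mulfV ?mul1r // pnatr_eq0.
Qed.

Lemma w0 : 4%:R * w 0 = 1.
Proof. by rewrite /w expr1 mulfV // pnatr_eq0. Qed.

Lemma sum_w a d : 3%:R * \sum_(a <= j < a + d) w j = 4%:R * w a - 4%:R * w (a + d).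
Proof.
elim: d => [|d IH]; first by rewrite addn0 big_geq // mulr0 subrr.
rewrite addnS big_nat_recr /=; last exact: leq_addr.
rewrite mulrDr IH (w_succ (a + d)) -addnS; lra.
Qed.

Lemma sum_w_le a b : (a <= b)%N -> 3%:R * \sum_(a <= j < b) w j = 4%:R * w a - 4%:R * w b.
Proof. by move=> h; rewrite -(subnKC h) sum_w. Qed.

Lemma sum_pred_mono m n (P Q : pred nat) :
  (forall j, (m <= j < n)%N -> P j -> Q j) ->
  \sum_(m <= j < n | P j) w j <= \sum_(m <= j < n | Q j) w j.
Proof.
move=> H; rewrite [X in X <= _]big_mkcond [X in _ <= X]big_mkcond /=.
apply: ler_sum_nat => j Hj; case: ifP => hP; first by rewrite (H j Hj hP) lexx.
by case: ifP => _; [exact: ltW (w_gt0 j)|exact: lexx].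
Qed.

Definition Tsum (k : nat) : rat := \sum_(0 <= j < k | lt2b j k) w j.
Definition rho (k : nat) : rat := Tsum k + w k.

Lemma Tsum_ge0 k : 0 <= Tsum k.
Proof. by apply: sumr_ge0 => j _; exact: ltW (w_gt0 j). Qed.

Lemma rho_ge0 k : 0 <= rho k.
Proof. by rewrite /rho addr_ge0 // ?Tsum_ge0 // ltW // w_gt0. Qed.

Lemma rho_lt1 k : rho k < 1.
Proof.
have h1 : Tsum k <= \sum_(0 <= j < k) w j.
  by apply: sum_pred_mono.
have h2 : 3%:R * \sum_(0 <= j < k.+1) w j = 1 - 4%:R * w k.+1 by rewrite sum_w_le // w0.
rewrite big_nat_recr //= in h2.
have h3 := w_gt0 k.+1.
rewrite /rho; lra.
Qed.

Lemma rho_lt k k' : lt2b k k' -> rho k < rho k'.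
Proof.
move=> H; have [Hle Hne] := (iffLR (lt2bP k k') H).
case: (ltngtP k k') => Hkk; last by [].
-
  have E : Tsum k' = \sum_(0 <= j < k | lt2b j k') w j
                     + (w k + \sum_(k.+1 <= j < k' | lt2b j k') w j).
    by rewrite /Tsum (big_cat_nat (leq0n k) (ltnW Hkk)) /= (big_ltn_cond Hkk) /= H.
  have h1 : Tsum k <= \sum_(0 <= j < k | lt2b j k') w j.
    apply: sum_pred_mono => j /andP [_ hj] /lt2bP [h h']; apply/lt2bP; split.
    + exact: le2_trans h Hle.
    + by move=> E'; move: (ltn_trans hj Hkk); rewrite E' ltnn.
  have h2 : 0 <= \sum_(k.+1 <= j < k' | lt2b j k') w j.
    by apply: sumr_ge0 => j _; exact: ltW (w_gt0 j).
  have h3 := w_gt0 k'.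
  rewrite /rho E; lra.
-
  have Hn : ~~ lt2b k' k.
    apply/negP => /lt2bP [h _]; apply: Hne; apply: f1_inj; exact: le2_anti.
  have E : Tsum k = \sum_(0 <= j < k' | lt2b j k) w j
                     + \sum_(k'.+1 <= j < k | lt2b j k) w j.
    by rewrite /Tsum (big_cat_nat (leq0n k') (ltnW Hkk)) /= (big_ltn_cond Hkk) /= (negbTE Hn).
  have h1 : \sum_(0 <= j < k' | lt2b j k) w j <= Tsum k'.
    apply: sum_pred_mono => j /andP [_ hj] /lt2bP [h h']; apply/lt2bP; split.
    + exact: le2_trans h Hle.
    + by move=> E'; move: hj; rewrite E' ltnn.
  have h2 : \sum_(k'.+1 <= j < k | lt2b j k) w j <= \sum_(k'.+1 <= j < k) w j.
    by apply: sum_pred_mono.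
  have h4 := sum_w_le Hkk.
  have h5 := w_succ k'.
  have h3 := w_gt0 k; have h6 := w_gt0 k'.
  rewrite /rho E; lra.
Qed.

Lemma rho_le x y : le2 x y -> rho (pos x) <= rho (pos y).
Proof.
move=> H; case: (eqVneq (pos x) (pos y)) => [->|hne]; first exact: lexx.
apply: ltW; apply: rho_lt; apply/lt2bP; rewrite !f1_pos; split => //; exact/eqP.
Qed.

Lemma rho_inj x y : rho (pos x) = rho (pos y) -> x = y.
Proof.
move=> E; apply: pos_inj; apply/eqP; apply: contraT => hne.
have [h|h] := le2_total x y.
- have hl : lt2b (pos x) (pos y).
    apply/lt2bP; rewrite !f1_pos; split => //; exact/eqP.
  by have := rho_lt hl; rewrite E ltxx.
- have hl : lt2b (pos y) (pos x).
    apply/lt2bP; rewrite !f1_pos; split => //.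
    by move=> E'; move: hne; rewrite E' eqxx.
  by have := rho_lt hl; rewrite E ltxx.
Qed.

Definition IsInt (x : rat) : Prop := exists z : int, x = z%:~R.

Lemma rho_int k N : (k <= N)%N -> IsInt (2%:R ^+ (2 * N.+1) * rho k).
Proof.
move=> hk.
have E4 : (2%:R ^+ (2 * N.+1) : rat) = 4%:R ^+ N.+1 by rewrite exprM -natrX.
have Hw : forall j, (j <= N)%N -> IsInt (4%:R ^+ N.+1 * w j).
  move=> j hj; exists ((4 ^ (N - j))%N)%:Z.
  rewrite -pmulrn natrX /w.
  have -> : N.+1 = ((N - j) + j.+1)%N by rewrite addnS subnK.
  by rewrite exprD mulfK // expf_neq0 // pnatr_eq0.
rewrite E4 /rho mulrDr.
have [z1 ->] : IsInt (4%:R ^+ N.+1 * Tsum k).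
  rewrite /Tsum big_nat_cond mulr_sumr.
  apply: (big_ind IsInt).
  - by exists 0.
  - by move=> x y [a ->] [b ->]; exists (a + b); rewrite rmorphD.
  - move=> j hj; apply: Hw.
    by case/andP: hj => /andP [_ hj] _; exact: leq_trans (ltnW hj) hk.
have [z2 ->] := Hw k hk.
by exists (z1 + z2); rewrite rmorphD.
Qed.

Definition reprK (T : KCB le1 le2) : option (X * X) :=
  match excluded_middle_informative
     (exists ab : X * X, Pab ab.1 ab.2 /\ forall x, proj1_sig T x <-> Sab ab.1 ab.2 x) with
  | left H => Some (proj1_sig (constructive_indefinite_description _ H))
  | right _ => None
  end.

Definition hval (T : KCB le1 le2) : nat * rat :=
  match reprK T with
  | Some ab => ((2 * (pos ab.1).+1)%N, rho (pos ab.2))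
  | None => (0%N, 0)
  end.

Lemma hval_Some (T : KCB le1 le2) a b : Pab a b -> (forall x, proj1_sig T x <-> Sab a b x) ->
  hval T = ((2 * (pos a).+1)%N, rho (pos b)).
Proof.
move=> Hp Hs; rewrite /hval /reprK; case: excluded_middle_informative => H.
- case: (constructive_indefinite_description _ H) => [[a' b'] /= [Hp' Hs']] /=.
  have [-> ->] : a' = a /\ b' = b.
    apply: Sab_inj => // x; rewrite -Hs' Hs; done.
  done.
- by exfalso; apply: H; exists (a, b).
Qed.

Lemma hval_None (T : KCB le1 le2) : (forall x, ~ proj1_sig T x) -> hval T = (0%N, 0).
Proof.
move=> Hn; rewrite /hval /reprK; case: excluded_middle_informative => H //.
exfalso; case: H => [[a b] [[h1 h2] Hs]]; apply: (Hn a); apply/Hs; split => //=.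
exact: le1_refl.
Qed.

Lemma hmem (T : KCB le1 le2) : omega_mem (hval T).
Proof.
case: (KCB_rep T) => [Hn|[a [b [Hp Hs]]]].
- rewrite hval_None //; split => //; split => //; exists 0; by rewrite /= mulr0.
- rewrite (hval_Some Hp Hs); split; first exact: rho_ge0.
  split; first exact: rho_lt1.
  apply: rho_int; apply/pos_le1; by case: Hp.
Qed.

Definition hmap (T : KCB le1 le2) : Omega_eta := exist _ (hval T) (hmem T).

Lemma join_unique (T : Type) (le : T -> T -> Prop) a b c c' :
  is_join le a b c -> is_join le a b c' -> le c c' /\ le c' c.
Proof.
move=> [h1 [h2 h3]] [h1' [h2' h3']]; split; [exact: h3|exact: h3'].
Qed.

Lemma hjoin_SS (T1 T2 T3 : KCB le1 le2) a1 b1 a2 b2 a3 b3 (H1 : Pab a1 b1) (H2 : Pab a2 b2)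
  (S1 : forall x, proj1_sig T1 x <-> Sab a1 b1 x) (S2 : forall x, proj1_sig T2 x <-> Sab a2 b2 x) :
  le1 a1 a3 -> le1 a2 a3 -> (a3 = a1 \/ a3 = a2) ->
  le2 b1 b3 -> le2 b2 b3 -> (b3 = b1 \/ b3 = b2) ->
  is_join (@KCB_le X le1 le2) T1 T2 T3 ->
  hval T3 = max_pair (hval T1) (hval T2).
Proof.
move=> la1 la2 ea lb1 lb2 eb HJ.
have H3 : Pab a3 b3.
  case: H1 H2 => [p1 q1] [p2 q2]; split.
  - by case: ea => ->; [exact: le2_trans lb1|exact: le2_trans lb2].
  - by case: eb => ->; [exact: le1_trans la1|exact: le1_trans la2].
have E1 : T1 = mkK H1 by apply: KCB_ext.
have E2 : T2 = mkK H2 by apply: KCB_ext.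
rewrite E1 E2 in HJ *.
have J := Sab_join H1 H2 H3 la1 la2 ea lb1 lb2 eb.
have [u v] := join_unique HJ J.
have E3 : T3 = mkK H3 by apply: KCB_ext => x; split; [exact: u|exact: v].
rewrite E3 (hval_Some H1 (T:=mkK H1) (fun x => iff_refl _)) (hval_Some H2 (T:=mkK H2) (fun x => iff_refl _)) (hval_Some H3 (T:=mkK H3) (fun x => iff_refl _)).
rewrite /max_pair /=; congr pair.
- case: ea => ?; subst a3.
  + apply/esym/maxn_idPl; rewrite leq_mul2l ltnS /=; exact/pos_le1.
  + apply/esym/maxn_idPr; rewrite leq_mul2l ltnS /=; exact/pos_le1.
- case: eb => ?; subst b3.
  + by rewrite max_l // rho_le.
  + by rewrite max_r // rho_le.
Qed.

Lemma dir2 : exists h : KCB le1 le2 -> Omega_eta, join_embedding (@KCB_le X le1 le2) Omega_le h.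
Proof.
exists hmap; split.
- move=> T U /(congr1 (@proj1_sig _ _)) /= E.
  case: (KCB_rep T) => [HnT|[a [b [HpT HsT]]]]; case: (KCB_rep U) => [HnU|[a' [b' [HpU HsU]]]].
  + by apply: KCB_ext => x; split => h; exfalso; [exact: HnT h|exact: HnU h].
  + by move: E; rewrite (hval_None HnT) (hval_Some HpU HsU); case; rewrite mulnS.
  + by move: E; rewrite (hval_None HnU) (hval_Some HpT HsT); case; rewrite mulnS.
  + move: E; rewrite (hval_Some HpT HsT) (hval_Some HpU HsU) => E.
    have E1 : (2 * (pos a).+1 = 2 * (pos a').+1)%N := congr1 fst E.
    have E2 : rho (pos b) = rho (pos b') := congr1 snd E.
    move/eqP: E1; rewrite eqn_mul2l /= eqSS => /eqP /pos_inj ea.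
    have eb := rho_inj E2.
    apply: KCB_ext => x; by rewrite HsT HsU ea eb.
- move=> T1 T2 T3 HJ; apply: Om_join_intro; rewrite /=.
  case: (KCB_rep T1) => [Hn1|[a1 [b1 [Hp1 Hs1]]]].
  + have E : T3 = T2.
      have [_ [_ h3]] := HJ; case: HJ => _ [h2 _].
      apply: KCB_ext => x; split; [apply: h3 => // y hy; exfalso; exact: Hn1 hy|exact: h2].
    rewrite E (hval_None Hn1); have [h0 _] := hmem T2.
    by case: (hval T2) h0 => n r /= h0; rewrite /max_pair /= max0n max_r.
  case: (KCB_rep T2) => [Hn2|[a2 [b2 [Hp2 Hs2]]]].
  + have E : T3 = T1.
      have [_ [_ h3]] := HJ; case: HJ => h1 _.
      apply: KCB_ext => x; split; [apply: h3 => // y hy; exfalso; exact: Hn2 hy|exact: h1].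
    rewrite E (hval_None Hn2); have [h0 _] := hmem T1.
    by case: (hval T1) h0 => n r /= h0; rewrite /max_pair /= maxn0 max_l.
  have [ha|ha] := le1_total a1 a2; have [hb|hb] := le2_total b1 b2.
  + exact: (hjoin_SS Hp1 Hp2 Hs1 Hs2 ha (le1_refl _) (or_intror erefl) hb (le2_refl _) (or_intror erefl) HJ).
  + exact: (hjoin_SS Hp1 Hp2 Hs1 Hs2 ha (le1_refl _) (or_intror erefl) (le2_refl _) hb (or_introl erefl) HJ).
  + exact: (hjoin_SS Hp1 Hp2 Hs1 Hs2 (le1_refl _) ha (or_introl erefl) hb (le2_refl _) (or_intror erefl) HJ).
  + exact: (hjoin_SS Hp1 Hp2 Hs1 Hs2 (le1_refl _) ha (or_introl erefl) (le2_refl _) hb (or_introl erefl) HJ).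
Qed.

End Bi.

Theorem theorem8p3 :
  forall (X : Type) (le1 le2 : X -> X -> Prop),
    linear_order le1 -> linear_order le2 ->
    order_type_omega le1 ->
    contains_copy_of_Q le2 ->
    join_equimorphic Omega_le (@KCB_le X le1 le2).
Proof.
move=> X le1 le2 L1 L2 [f1 [Hs Ho]] [g Hg]; split.
- exact: (dir1 L1 L2 Hs Ho Hg).
- exact: (dir2 L1 L2 Hs Ho).
Qed.
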